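(* Let $I=(0,1)$ and let $\Omega\subset\mathbb R^d$ be a bounded Lipschitz domain. Let $\mathbf D=\mathbf D^\top\in\mathbb R^{d\times d}$ be positive definite and $c\ge 0$, and set $a(\eta,\zeta):=\int_\Omega \mathbf D\nabla\eta\cdot\nabla\zeta+c\,\eta\zeta\,\mathrm d\vec x$ for $\eta,\zeta\in H^1_0(\Omega)$. Fix $p_t,p_{\vec x}\in\mathbb N$, a partition $\mathcal T_I$ of $I$ into subintervals and a conforming triangulation $\mathcal T_\Omega$ of $\Omega$. Let $X_t:=H^1(I)\cap\mathbb P^{-1}_{p_t}(\mathcal T_I)$ with Lagrange basis $\Phi_t=(\varphi_1,\dots,\varphi_{N_t})$, $X_{\vec x}:=H^1_0(\Omega)\cap\mathbb P^{-1}_{p_{\vec x}}(\mathcal T_\Omega)$ with Lagrange basis $\Phi_{\vec x}=(\psi_1,\dots,\psi_{N_{\vec x}})$, and $Y_t:=\mathbb P^{-1}_{p_t}(\mathcal T_I)$ with an $L_2(I)$-orthogonal basis $\Xi=(\xi_1,\dots,\xi_{M_t})$. Put $X^\delta:=X_t\otimes X_{\vec x}$, $Y^\delta:=Y_t\otimes X_{\vec x}$, and for $w\in X^\delta$, $v\in Y^\delta$ let $(Bw)(v):=\int_I \langle \partial_t w(t),v(t)\rangle_{L_2(\Omega)}+a(w(t),v(t))\,\mathrm dt$. Let $\mathbf O_{ij}:=\int_I\xi_j\xi_i$, let $\mathbf K_{\vec x}\in\mathbb R^{N_{\vec x}\times N_{\vec x}}$ be symmetric positive definite, $\mathbf K_Y:=\mathbf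 O^{-1}\otimes\mathbf K_{\vec x}$, and define $K_Y^\delta:(Y^\delta)'\to Y^\delta$ by $K_Y^\delta\ell:=\sum_{(j,l),(j',l')}(\mathbf K_Y)_{(j,l),(j',l')}\,\ell(\xi_{j'}\otimes\psi_{l'})\,\xi_j\otimes\psi_l$. For $u,w\in X^\delta$ let $(S^\delta u)(w):=(Bw)\big(K_Y^\delta((Bu)|_{Y^\delta})\big)+\langle u(0),w(0)\rangle_{L_2(\Omega)}$, and let $\mathbf S_{(i,k),(i',k')}:=(S^\delta(\varphi_{i'}\otimes\psi_{k'}))(\varphi_i\otimes\psi_k)$. Define $(\mathbf L)_{ij}:=\int_I\varphi_j'\varphi_i$, $(\mathbf M_t)_{ij}:=\int_I\varphi_j\varphi_i$, $(\mathbf A_t)_{ij}:=\int_I\varphi_j'\varphi_i'$, $(\mathbf\Gamma_0)_{ij}:=\varphi_i(0)\varphi_j(0)$, $(\mathbf M_{\vec x})_{kl}:=\int_\Omega\psi_l\psi_k$ and $(\mathbf A_{\vec x})_{kl}:=\int_\Omega\mathbf D\nabla\psi_l\cdot\nabla\psi_k+c\,\psi_l\psi_k$. Then \[ \mathbf S=\mathbf A_t\otimes(\mathbf M_{\vec x}\mathbf K_{\vec x}\mathbf M_{\vec x})+\mathbf M_t\otimes(\mathbf A_{\vec x}\mathbf K_{\vec x}\mathbf A_{\vec x})+\mathbf L^\top\otimes(\mathbf M_{\vec x}\mathbf K_{\vec x}\mathbf A_{\vec x})+\mathbf L\otimes(\mathbf A_{\vec x}\mathbf K_{\vec x}\mathbf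 M_{\vec x})+\mathbf\Gamma_0\otimes\mathbf M_{\vec x}. \] In particular, $\mathbf S$ does not depend on the choice of $Y_t$ (among spaces containing $X_t$ and $\tfrac{\mathrm d}{\mathrm dt}X_t$) nor on the choice of its orthogonal basis $\Xi$.
   Context: $\mathbb P^{-1}_p(\mathcal T)$ denotes the space of (possibly discontinuous) piecewise polynomials of degree at most $p$ on the partition $\mathcal T$; note $X_t\subset Y_t$ and $\tfrac{\mathrm d}{\mathrm dt}X_t\subset Y_t$. Kronecker products use index pairs with the time index outer: $(\mathbf P\otimes\mathbf Q)_{(i,k),(j,l)}=\mathbf P_{ij}\mathbf Q_{kl}$. *)

(* Defs.v *)
From HB Require Import structures.
From mathcomp Require Import all_boot all_order all_algebra.
From mathcomp Require Import all_classical all_reals all_analysis.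
Set Implicit Arguments. Unset Strict Implicit. Unset Printing Implicit Defensive.
Import Order.TTheory GRing.Theory Num.Theory.
Import numFieldNormedType.Exports.
Local Open Scope classical_set_scope.
Local Open Scope ring_scope.

Definition intI {R : realType} (f : R -> R) : R :=
  \int[@lebesgue_measure R]_(t in `]0, 1[) f t.

Definition is_partition {R : realType} (n : nat) (tau : nat -> R) : Prop :=
  (0 < n)%N /\ tau 0%N = 0 /\ tau n = 1 /\
  forall k, (k < n)%N -> tau k < tau k.+1.

(* t lies in the interior of some subinterval (i.e. t in I, off the nodes);
   functions of P^{-1} are L2-classes, so they are compared off the nodes *)
Definition off_nodes {R : realType} (n : nat) (tau : nat -> R) (t : R) : Prop :=
  exists2 k, (k < n)%N & tau k < t < tau k.+1.

Definition in_Pdisc {R : realType} (n : nat) (tau : nat -> R) (p : nat)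
  (f : R -> R) : Prop :=
  forall k, (k < n)%N -> exists q : {poly R},
    (size q <= p.+1)%N /\ forall t, tau k < t < tau k.+1 -> f t = q.[t].

(* f in H^1(I) cap P^{-1}_p(T_I) (continuous representative on [0,1]) *)
Definition in_Xt {R : realType} (n : nat) (tau : nat -> R) (p : nat)
  (f : R -> R) : Prop :=
  in_Pdisc n tau p f /\ {within `[0, 1], continuous f}.

Definition basis_Xt {R : realType} (n : nat) (tau : nat -> R) (p : nat)
  (N : nat) (phi : 'I_N -> R -> R) : Prop :=
  (forall i, in_Xt n tau p (phi i)) /\
  (forall f, in_Xt n tau p f -> exists c : 'I_N -> R,
      forall t, 0 <= t <= 1 -> f t = \sum_i c i * phi i t) /\
  (forall c : 'I_N -> R,
      (forall t, 0 <= t <= 1 -> \sum_i c i * phi i t = 0) ->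
      forall i, c i = 0).

(* xi is an L2(I)-orthogonal basis of Y_t = P^{-1}_p(T_I)
   (span and independence understood as L2-classes, i.e. off the nodes) *)
Definition orth_basis_Yt {R : realType} (n : nat) (tau : nat -> R) (p : nat)
  (M : nat) (xi : 'I_M -> R -> R) : Prop :=
  (forall j, in_Pdisc n tau p (xi j)) /\
  (forall f, in_Pdisc n tau p f -> exists c : 'I_M -> R,
      forall t, off_nodes n tau t -> f t = \sum_j c j * xi j t) /\
  (forall c : 'I_M -> R,
      (forall t, off_nodes n tau t -> \sum_j c j * xi j t = 0) ->
      forall j, c j = 0) /\
  (forall j j', j != j' -> intI (fun t => xi j t * xi j' t) = 0).

Definition kron {R : ringType} {m n p q : nat}
  (P : 'M[R]_(m, n)) (Q : 'M[R]_(p, q)) : 'I_m * 'I_p -> 'I_n * 'I_q -> R :=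
  fun ik jl => P ik.1 jl.1 * Q ik.2 jl.2.

(* Elements of X^delta = X_t (x) X_x are  sum_(i,k) W i k phi_i (x) psi_k,
   elements of Y^delta = Y_t (x) X_x are sum_(j,l) V j l xi_j (x) psi_l;
   they are represented by their coefficient matrices. *)
Section SpaceTime.
Variables (R : realType) (E : lmodType R).
Variables (m a : E -> E -> R). (* m = <.,.>_{L2(Omega)}, a = the form a *)
Variables (Nt Mt Nx : nat).
Variables (phi : 'I_Nt -> R -> R) (xi : 'I_Mt -> R -> R) (psi : 'I_Nx -> E).

Definition Xval (W : 'M[R]_(Nt, Nx)) (t : R) : E :=
  \sum_i \sum_k (W i k * phi i t) *: psi k.
Definition Xdt (W : 'M[R]_(Nt, Nx)) (t : R) : E :=
  \sum_i \sum_k (W i k * derive1 (phi i) t) *: psi k.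
Definition Yval (V : 'M[R]_(Mt, Nx)) (t : R) : E :=
  \sum_j \sum_l (V j l * xi j t) *: psi l.

Definition Bform (W : 'M[R]_(Nt, Nx)) (V : 'M[R]_(Mt, Nx)) : R :=
  intI (fun t => m (Xdt W t) (Yval V t) + a (Xval W t) (Yval V t)).

Definition KYdelta (KY : 'I_Mt * 'I_Nx -> 'I_Mt * 'I_Nx -> R)
  (ell : 'M[R]_(Mt, Nx) -> R) : 'M[R]_(Mt, Nx) :=
  \matrix_(j, l) \sum_j' \sum_l' KY (j, l) (j', l') * ell (delta_mx j' l').

Definition Sdelta (KY : 'I_Mt * 'I_Nx -> 'I_Mt * 'I_Nx -> R)
  (U W : 'M[R]_(Nt, Nx)) : R :=
  Bform W (KYdelta KY (fun V => Bform U V)) + m (Xval U 0) (Xval W 0).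

Definition Smat (KY : 'I_Mt * 'I_Nx -> 'I_Mt * 'I_Nx -> R) :
  'I_Nt * 'I_Nx -> 'I_Nt * 'I_Nx -> R :=
  fun ik ik' => Sdelta KY (delta_mx ik'.1 ik'.2) (delta_mx ik.1 ik.2).

Definition Omat : 'M[R]_Mt := \matrix_(i, j) intI (fun t => xi j t * xi i t).
Definition Lmat : 'M[R]_Nt :=
  \matrix_(i, j) intI (fun t => derive1 (phi j) t * phi i t).
Definition Mtmat : 'M[R]_Nt := \matrix_(i, j) intI (fun t => phi j t * phi i t).
Definition Atmat : 'M[R]_Nt :=
  \matrix_(i, j) intI (fun t => derive1 (phi j) t * derive1 (phi i) t).
Definition Gamma0 : 'M[R]_Nt := \matrix_(i, j) (phi i 0 * phi j 0).
Definition Mxmat : 'M[R]_Nx := \matrix_(k, l) m (psi l) (psi k).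
Definition Axmat : 'M[R]_Nx := \matrix_(k, l) a (psi l) (psi k).

End SpaceTime.

Definition symmetric_bilinear {R : realType} {E : lmodType R}
  (b : E -> E -> R) : Prop :=
  (forall x y, b x y = b y x) /\
  (forall (r : R) x y z, b (r *: x + y) z = r * b x z + b y z).

Definition spd {R : realType} {N : nat} (K : 'M[R]_N) : Prop :=
  K^T = K /\ forall v : 'cV[R]_N, v != 0 -> 0 < (v^T *m K *m v) 0 0.

(* Main.v *)
Require Import Defs.
From HB Require Import structures.
From mathcomp Require Import all_boot all_order all_algebra.
From mathcomp Require Import all_classical all_reals all_analysis.
From mathcomp Require Import measurable_realfun.
From mathcomp Require Import ring lra.
Import Order.TTheory GRing.Theory Num.Theory.
Import numFieldNormedType.Exports.
Set Implicit Arguments. Unset Strict Implicit. Unset Printing Implicit Defensive.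

Section Aux.
Local Open Scope classical_set_scope.
Local Open Scope ring_scope.
Variable R : realType.
Local Notation mu := (@lebesgue_measure R).

Lemma integrableU (A B : set R) (f : R -> R) : measurable A -> measurable B ->
  mu.-integrable A (EFin \o f) -> mu.-integrable B (EFin \o f) ->
  mu.-integrable (A `|` B) (EFin \o f).
Proof.
move=> mA mB /integrableP[mfA iA] /integrableP[mfB iB]; apply/integrableP; split.
  by apply/measurable_funU.
have -> : A `|` B = A `|` (B `\` A).
  apply/seteqP; split=> x /=; first by case=> [?|?]; [left|have [?|?] := pselect (A x); [left|right]].
  by case=> [?|[]]; [left|right].
have mBA : measurable (B `\` A) by exact: measurableD.
rewrite integral_setU //; last 2 first.
- have h := (proj2 (measurable_funU (EFin \o f) mA mBA)) (conj mfA (measurable_funS mB (@subIsetl _ B (~` A)) mfB)).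
  exact: (measurableT_comp (@abse_measurable R setT) h).

- by rewrite disj_set2E setDIK.
apply: lte_add_pinfty => //.
apply: le_lt_trans iB; apply: ge0_subset_integral => //.
  exact: (measurableT_comp (@abse_measurable R setT) mfB).
Qed.


Variables (n : nat) (tau : nat -> R).
Hypothesis hp : is_partition n tau.

Definition PW (f : R -> R) := forall k, (k < n)%N ->
  exists q : {poly R}, forall t, tau k < t < tau k.+1 -> f t = q.[t].

Lemma tau_mono i j : (i <= j <= n)%N -> tau i <= tau j.
Proof.
case: hp => _ [_ [_ hlt]].
move=> /andP[]; elim: j => [|j IH]; first by rewrite leqn0 => /eqP ->.
rewrite leq_eqVlt => /orP[/eqP -> //|hij] hj.
apply: le_trans (IH hij (ltnW hj)) _.
exact/ltW/hlt.
Qed.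

Lemma cover_aux K t : (K <= n)%N -> 0 < t -> t < tau K ->
  exists2 k, (k < K)%N & tau k <= t < tau k.+1.
Proof.
case: hp => _ [h0 _].
elim: K => [|K IH] hK ht0 htK; first by move: htK; rewrite h0 => /(lt_trans ht0); rewrite ltxx.
have [h|h] := ltP t (tau K).
  by have [k hk hk'] := IH (ltnW hK) ht0 h; exists k => //; exact: ltnW.
by exists K => //; rewrite h htK.
Qed.

Lemma cover_nodes t : 0 < t < 1 -> exists2 k, (k < n)%N & tau k <= t < tau k.+1.
Proof.
case: hp => _ [_ [h1 _]] /andP[ht0 ht1].
by apply: cover_aux => //; rewrite h1.
Qed.

Lemma piece_sub k t : (k < n)%N -> tau k < t < tau k.+1 -> 0 < t < 1.
Proof.
move=> hk /andP[h1 h2]; case: hp => _ [h0 [hn _]].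
apply/andP; split.
  by apply: le_lt_trans h1; rewrite -h0; apply: tau_mono; rewrite leq0n ltnW.
by apply: lt_le_trans h2 _; rewrite -hn; apply: tau_mono; rewrite hk leqnn.
Qed.

Lemma poly_integrable (q : {poly R}) (x y : R) :
  mu.-integrable `]x, y[ (EFin \o horner q).
Proof.
have h := @continuous_compact_integrable R (horner q) `[x, y] (@segment_compact R x y)
  (continuous_subspaceT (@continuous_horner R q)).
apply: integrableS h => //.
exact: subset_itvW.
Qed.

Lemma PW_integrable f : PW f -> mu.-integrable `]0, 1[ (EFin \o f).
Proof.
move=> hf.
pose U K : set (measurableTypeR R) := \big[setU/set0]_(k < K) (`]tau k, tau k.+1[ `|` [set tau k]).
have mU K : measurable (U K).
  by apply: bigsetU_measurable => k _; apply: measurableU => //; exact: measurable_set1.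
have iU K : (K <= n)%N -> mu.-integrable (U K) (EFin \o f).
  elim: K => [|K IH] hK; first by rewrite /U big_ord0; exact: integrable_set0.
  rewrite /U big_ord_recr /=; apply: integrableU.
  - exact: mU.
  - by apply: measurableU => //; exact: measurable_set1.
  - exact: IH (ltnW hK).
  apply: integrableU; [by [] | exact: measurable_set1 | |].
    have [q hq] := hf K hK.
    apply: eq_integrable (poly_integrable q (tau K) (tau K.+1)) => //.
    by move=> t; rewrite inE /= in_itv /= => /hq ->.
  apply: null_set_integrable.
  - exact: measurable_set1.
  - exact: measurable_fun_set1.
  - exact: lebesgue_measure_set1.
have cU K t : (K <= n)%N -> 0 < t -> t < tau K -> U K t.
  elim: K => [|K IH] hK ht0 htK.
    by move: htK; case: hp => _ [-> _] => /(lt_trans ht0); rewrite ltxx.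
  rewrite /U big_ord_recr /=.
  have [h|h] := ltP t (tau K); first by left; exact: IH (ltnW hK) ht0 h.
  right; move: h; rewrite le_eqVlt => /orP[/eqP ->|h]; first by right.
  by left; rewrite /= in_itv /= h htK.
have hsub : `]0, 1[ `<=` U n.
move=> t /=; rewrite in_itv /= => /andP[ht0 ht1]; apply: cU => //.
by case: hp => _ [_ [-> _]].
exact: (integrableS (mU n) _ hsub (iU n (leqnn n))).
Qed.

Lemma PW_add f g : PW f -> PW g -> PW (fun t => f t + g t).
Proof.
move=> hf hg k hk; have [q1 h1] := hf k hk; have [q2 h2] := hg k hk.
by exists (q1 + q2) => t ht; rewrite hornerD h1 ?h2.
Qed.

Lemma PW_mul f g : PW f -> PW g -> PW (fun t => f t * g t).
Proof.
move=> hf hg k hk; have [q1 h1] := hf k hk; have [q2 h2] := hg k hk.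
by exists (q1 * q2) => t ht; rewrite hornerM h1 ?h2.
Qed.

Lemma PW_cst c : PW (fun _ => c).
Proof. by move=> k hk; exists c%:P => t _; rewrite hornerC. Qed.

Lemma PW_scale c f : PW f -> PW (fun t => c * f t).
Proof. by move=> hf; apply: PW_mul => //; exact: PW_cst. Qed.

Lemma PW_sum (I : Type) (r : seq I) (F : I -> R -> R) :
  (forall i, PW (F i)) -> PW (fun t => \sum_(i <- r) F i t).
Proof.
move=> hF; elim: r => [|x r IH].
  by move=> k hk; exists 0 => t _; rewrite big_nil horner0.
move=> k hk; have [q hq] := IH k hk; have [q' hq'] := hF x k hk.
by exists (q' + q) => t ht; rewrite big_cons hornerD hq' ?hq.
Qed.

Lemma intI_add f g : PW f -> PW g -> intI (fun t => f t + g t) = intI f + intI g.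
Proof.
by move=> hf hg; rewrite /intI RintegralD //; exact: PW_integrable.
Qed.

Lemma intI_scale c f : PW f -> intI (fun t => c * f t) = c * intI f.
Proof.
by move=> hf; rewrite /intI RintegralZl //; exact: PW_integrable.
Qed.

Lemma intI0 : intI (fun _ : R => 0) = 0 :> R.
Proof.
rewrite /intI /Rintegral (eq_integral (fun=> 0%E)) ?integral0 //.
Qed.

Lemma intI_sum (I : Type) (r : seq I) (F : I -> R -> R) :
  (forall i, PW (F i)) ->
  intI (fun t => \sum_(i <- r) F i t) = \sum_(i <- r) intI (F i).
Proof.
move=> hF; elim: r => [|x r IH].
  by rewrite big_nil -[RHS]intI0 /intI; apply: eq_Rintegral => t _; rewrite big_nil.
rewrite big_cons -IH -intI_add //; last exact: PW_sum.
by rewrite /intI; apply: eq_Rintegral => t _; rewrite big_cons.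
Qed.

Lemma intI_ae f g : PW f -> PW g ->
  (forall t, off_nodes n tau t -> f t = g t) -> intI f = intI g.
Proof.
move=> hf hg hfg; rewrite /intI /Rintegral; congr fine.
apply: ae_eq_integral => //.
- exact: (measurable_int _ (PW_integrable hf)).
- exact: (measurable_int _ (PW_integrable hg)).
exists (range tau); split.
- apply: countable_measurable; [move=> ?; exact: measurable_set1 | exact: card_image_le].
- apply: countable_lebesgue_measure0; exact: card_image_le.
move=> t /= /not_implyP[ht hne].
move: ht; rewrite /= in_itv /= => ht.
have [k hk /andP[h1 h2]] := cover_nodes ht.
move: h1; rewrite le_eqVlt => /orP[/eqP e|h1]; first by exists k.
by exfalso; apply: hne; rewrite /= hfg //; exists k => //; rewrite h1 h2.
Qed.

Lemma derive1_piece (f : R -> R) (q : {poly R}) (x y t : R) :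
  (forall s, x < s < y -> f s = q.[s]) -> x < t < y ->
  derive1 f t = (q^`()).[t].
Proof.
move=> hq ht.
have hn : \forall s \near t, f s = horner q s.
  have hin : t \in `]x, y[ by rewrite in_itv.
  have hn' : \forall s \near t, s \in `]x, y[ := near_in_itvoo hin.
  by apply: filterS hn' => s; rewrite in_itv /= => /hq.
rewrite derive1E (near_eq_derive _ hn) -derive1E.
by rewrite -derivE.
Qed.

Lemma PW_derive f : PW f -> PW (derive1 f).
Proof.
move=> hf k hk; have [q hq] := hf k hk.
by exists q^`() => t ht; exact: derive1_piece hq ht.
Qed.

Lemma in_Pdisc_PW p f : in_Pdisc n tau p f -> PW f.
Proof. by move=> hf k hk; have [q [_ hq]] := hf k hk; exists q. Qed.

Lemma in_Pdisc_derive p f : in_Pdisc n tau p f -> in_Pdisc n tau p (derive1 f).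
Proof.
move=> hf k hk; have [q [hs hq]] := hf k hk.
exists q^`(); split; last by move=> t ht; exact: derive1_piece hq ht.
have [->|q0] := eqVneq q 0; first by rewrite deriv0 size_poly0.
by apply: leq_trans hs; apply: ltnW; exact: lt_size_deriv.
Qed.

Lemma intI_sq_gt0 f t0 : PW f -> off_nodes n tau t0 -> f t0 != 0 ->
  0 < intI (fun t => f t * f t).
Proof.
move=> hf [k hk ht0] hne.
have [q hq] := hf k hk.
have hqt0 := hq _ ht0.
pose c := q.[t0] * q.[t0] / 2.
have c0 : 0 < c.
  by rewrite /c divr_gt0 // -expr2 exprn_even_gt0 //= -hqt0.
have Hn : \forall t \near t0, (tau k < t < tau k.+1) /\ c < q.[t] * q.[t].
  near=> t; split.
    near: t.
    have hin : t0 \in `]tau k, tau k.+1[ by rewrite in_itv.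
    have hn' : \forall s \near t0, s \in `]tau k, tau k.+1[ := near_in_itvoo hin.
    by apply: filterS hn' => s; rewrite in_itv.
  rewrite -hornerM; near: t.
  apply: (cvgr_gt (f := horner (q * q))) => //; first exact: continuous_horner.
  rewrite hornerM /c gtr_pMr ?invf_lt1 ?ltr1n //.
  by rewrite -expr2 exprn_even_gt0 //= -hqt0.
have [e /= e0 he] := (nbhs_ballP _ _).1 Hn.
have hJ : forall t, t0 - e < t < t0 + e -> (tau k < t < tau k.+1) /\ c < q.[t] * q.[t].
  by move=> t ht; apply: he; rewrite ball_itv /= in_itv /=.
have m01 : measurable (`]0, 1[ : set (measurableTypeR R)) by exact: measurable_itv.
have ifin := integrable_fin_num m01 (PW_integrable (PW_mul hf hf)).
have mJ : measurable (`]t0 - e, t0 + e[ : set (measurableTypeR R)) by exact: measurable_itv.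
have key : ((c * (e *+ 2))%:E <= \int[mu]_(x in `]0%R, 1%R[) (f x * f x)%:E)%E.
  apply: (@le_trans _ _ (\int[mu]_(x in `](t0 - e)%R, (t0 + e)%R[) (f x * f x)%:E)%E); last first.
    apply: ge0_subset_integral => //.
    - exact: (measurable_int _ (PW_integrable (PW_mul hf hf))).
    - by move=> x _; rewrite lee_fin -expr2 sqr_ge0.
    - move=> t /=; rewrite in_itv /= => /hJ [ht _].
      by rewrite in_itv /=; exact: piece_sub ht.
  apply: (@le_trans _ _ (\int[mu]_(x in `](t0 - e)%R, (t0 + e)%R[) (cst c%:E) x)%E).
    rewrite integral_cst // [X in (_ * X)%E]lebesgue_measure_itv /= lte_fin ltrBlDr -addrA ltrDl.
    rewrite addr_gt0 //= -EFinM lee_fin le_eqVlt; apply/orP; left; apply/eqP; congr (_ * _).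
    by rewrite mulr2n; lra.
  apply: ge0_le_integral => //.
  - by move=> x _; rewrite lee_fin ltW.
  - apply: measurable_funS (measurable_int _ (PW_integrable (PW_mul hf hf))) => //.
    move=> t /=; rewrite in_itv /= => /hJ [ht _].
    by rewrite in_itv /=; exact: piece_sub ht.
  - move=> t /=; rewrite in_itv /= => /hJ [ht hc].
    by rewrite lee_fin hq //; exact: ltW.
rewrite /intI /Rintegral; rewrite -(fineK ifin) lee_fin in key.
apply: lt_le_trans key; rewrite mulr_gt0 // pmulrn_lgt0 //.
Unshelve. all: by end_near.
Qed.

End Aux.


Section Alg.
Local Open Scope ring_scope.
Variable R : comRingType.

Lemma sum_delta2 (V : zmodType) a b (i0 : 'I_a) (k0 : 'I_b) (F : 'I_a -> 'I_b -> R -> V) :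
  (forall i k, F i k 0 = 0) ->
  \sum_i \sum_k F i k (delta_mx i0 k0 i k) = F i0 k0 1.
Proof.
move=> H.
rewrite (bigD1 i0) //= (bigD1 k0) //= mxE !eqxx /= big1 ?addr0 => [|k hk]; last first.
  by rewrite mxE eqxx (negbTE hk) /= H.
rewrite big1 ?addr0 // => i hi; rewrite big1 // => k _.
by rewrite mxE (negbTE hi) /= H.
Qed.

Lemma mulmx3E' N (A B C : 'M[R]_N) k k' (fa fc : 'I_N -> R) :
  (forall l, A k l = fa l) -> (forall l, C l k' = fc l) ->
  (A *m B *m C) k k' = \sum_l' (\sum_l fa l * B l l') * fc l'.
Proof.
move=> ha hc; rewrite mxE; apply: eq_bigr => l' _; rewrite mxE hc.
by congr (_ * _); apply: eq_bigr => l _; rewrite ha.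
Qed.

Lemma prod4 J L (A : 'I_J -> 'I_J -> R) (B : 'I_L -> 'I_L -> R) :
  (\sum_j \sum_j' A j j') * (\sum_l' \sum_l B l l') =
  \sum_j \sum_l \sum_j' \sum_l' A j j' * B l l'.
Proof.
transitivity (\sum_j \sum_j' \sum_l \sum_l' A j j' * B l l').
  rewrite mulr_suml; apply: eq_bigr => j _; rewrite mulr_suml.
  apply: eq_bigr => j' _; rewrite mulr_sumr.
  under eq_bigr do rewrite mulr_sumr.
  by rewrite exchange_big.
by apply: eq_bigr => j _; rewrite exchange_big.
Qed.

Lemma quad J L (O : 'I_J -> 'I_J -> R) (K : 'I_L -> 'I_L -> R)
  (x u x' u' : 'I_J -> R) (y v y' v' : 'I_L -> R) :
  \sum_j \sum_l (\sum_j' \sum_l' O j j' * K l l' * (x' j' * y' l' + u' j' * v' l'))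
     * (x j * y l + u j * v l) =
  (\sum_j \sum_j' x j * O j j' * x' j') * (\sum_l' (\sum_l y l * K l l') * y' l')
  + (\sum_j \sum_j' u j * O j j' * u' j') * (\sum_l' (\sum_l v l * K l l') * v' l')
  + (\sum_j \sum_j' x j * O j j' * u' j') * (\sum_l' (\sum_l y l * K l l') * v' l')
  + (\sum_j \sum_j' u j * O j j' * x' j') * (\sum_l' (\sum_l v l * K l l') * y' l').
Proof.
have e (g h : 'I_L -> R) :
    \sum_l' (\sum_l g l * K l l') * h l' = \sum_l' \sum_l g l * K l l' * h l'.
  by apply: eq_bigr => l' _; rewrite mulr_suml.
rewrite !e !prod4 -!big_split /=; apply: eq_bigr => j _.
rewrite -!big_split /=; apply: eq_bigr => l _.
rewrite mulr_suml -!big_split /=; apply: eq_bigr => j' _.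
rewrite mulr_suml -!big_split /=; apply: eq_bigr => l' _.
ring.
Qed.

End Alg.

Section Bil.
Local Open Scope ring_scope.
Variables (R : realType) (E : lmodType R) (b : E -> E -> R).
Hypothesis hb : symmetric_bilinear b.

Lemma b0l z : b 0 z = 0.
Proof. have := hb.2 1 0 0 z; rewrite scale1r addr0 mul1r; lra. Qed.

Lemma bZl r x z : b (r *: x) z = r * b x z.
Proof. by have := hb.2 r x 0 z; rewrite addr0 b0l addr0. Qed.

Lemma bDl x y z : b (x + y) z = b x z + b y z.
Proof. by have := hb.2 1 x y z; rewrite scale1r mul1r. Qed.

Lemma bZr r x z : b z (r *: x) = r * b z x.
Proof. by rewrite hb.1 bZl hb.1. Qed.

Lemma b_suml I (r : seq I) (P : pred I) (F : I -> E) z :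
  b (\sum_(i <- r | P i) F i) z = \sum_(i <- r | P i) b (F i) z.
Proof. by elim/big_rec2 : _ => [|i y1 y2 _ <-]; [exact: b0l | exact: bDl]. Qed.

Lemma b_sumr I (r : seq I) (P : pred I) (F : I -> E) z :
  b z (\sum_(i <- r | P i) F i) = \sum_(i <- r | P i) b z (F i).
Proof.
rewrite hb.1 b_suml; by apply: eq_bigr => i _; rewrite hb.1.
Qed.

End Bil.


Section Main.
Local Open Scope ring_scope.
Variables (R : realType) (E : lmodType R) (m a : E -> E -> R)
  (n : nat) (tau : nat -> R) (pt : nat)
  (Nt Mt Nx : nat) (phi : 'I_Nt -> R -> R) (xi : 'I_Mt -> R -> R)
  (psi : 'I_Nx -> E).
Hypotheses (hm : symmetric_bilinear m) (ha : symmetric_bilinear a)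
  (hp : is_partition n tau) (hphi : basis_Xt n tau pt phi)
  (hxi : orth_basis_Yt n tau pt xi).

Let PWphi i : PW n tau (phi i) := in_Pdisc_PW (hphi.1 i).1.
Let PWdphi i : PW n tau (derive1 (phi i)) := PW_derive (PWphi i).
Let PWxi j : PW n tau (xi j) := in_Pdisc_PW (hxi.1 j).

Definition Lh j i := intI (fun t => derive1 (phi i) t * xi j t).
Definition Nh j i := intI (fun t => phi i t * xi j t).

Lemma Xval_delta i k t : Xval phi psi (delta_mx i k) t = phi i t *: psi k.
Proof.
rewrite /Xval (@sum_delta2 _ _ _ _ i k (fun i k d => (d * phi i t) *: psi k)) ?mul1r //.
by move=> ? ?; rewrite mul0r scale0r.
Qed.

Lemma Xdt_delta i k t : Xdt phi psi (delta_mx i k) t = derive1 (phi i) t *: psi k.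
Proof.
rewrite /Xdt (@sum_delta2 _ _ _ _ i k (fun i k d => (d * derive1 (phi i) t) *: psi k)) ?mul1r //.
by move=> ? ?; rewrite mul0r scale0r.
Qed.

Lemma Bform_delta i k V :
  Bform m a phi xi psi (delta_mx i k) V =
  \sum_j \sum_l V j l * (Lh j i * m (psi k) (psi l) + Nh j i * a (psi k) (psi l)).
Proof.
rewrite /Bform.
have e t : m (Xdt phi psi (delta_mx i k) t) (Yval xi psi V t)
         + a (Xval phi psi (delta_mx i k) t) (Yval xi psi V t) =
  \sum_j \sum_l ((V j l * m (psi k) (psi l)) * (derive1 (phi i) t * xi j t)
               + (V j l * a (psi k) (psi l)) * (phi i t * xi j t)).
  rewrite Xdt_delta Xval_delta /Yval (bZl hm) (bZl ha) (b_sumr hm) (b_sumr ha).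
  rewrite !mulr_sumr -big_split /=; apply: eq_bigr => j _.
  rewrite (b_sumr hm) (b_sumr ha) !mulr_sumr -big_split /=; apply: eq_bigr => l _.
  rewrite (bZr hm) (bZr ha); ring.
rewrite (_ : (fun t => _) = fun t => \sum_j \sum_l ((V j l * m (psi k) (psi l)) * (derive1 (phi i) t * xi j t)
               + (V j l * a (psi k) (psi l)) * (phi i t * xi j t))); last first.
  by apply: funext => t; rewrite e.
rewrite (intI_sum hp); last first.
  move=> j; apply: PW_sum => l; apply: PW_add; apply: PW_scale; apply: PW_mul => //.
apply: eq_bigr => j _.
rewrite (intI_sum hp); last first.
  move=> l; apply: PW_add; apply: PW_scale; apply: PW_mul => //.
apply: eq_bigr => l _.
rewrite (intI_add hp); try by apply: PW_scale; apply: PW_mul.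
rewrite (intI_scale hp); last by apply: PW_mul.
rewrite (intI_scale hp); last by apply: PW_mul.
rewrite /Lh /Nh; ring.
Qed.

Lemma Smat_expand KY i k i' k' :
  Smat m a phi xi psi KY (i, k) (i', k') =
  \sum_j \sum_l (\sum_j' \sum_l' KY (j, l) (j', l') *
       (Lh j' i' * m (psi k') (psi l') + Nh j' i' * a (psi k') (psi l')))
     * (Lh j i * m (psi k) (psi l) + Nh j i * a (psi k) (psi l))
  + phi i' 0 * (phi i 0 * m (psi k') (psi k)).
Proof.
rewrite /Smat /Sdelta /= Bform_delta; congr (_ + _).
  apply: eq_bigr => j _; apply: eq_bigr => l _; rewrite /KYdelta mxE; congr (_ * _).
  apply: eq_bigr => j' _; apply: eq_bigr => l' _; congr (_ * _).
  rewrite Bform_delta.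
  rewrite (@sum_delta2 _ _ _ _ j' l' (fun j l d => d * (Lh j i' * m (psi k') (psi l) + Nh j i' * a (psi k') (psi l)))) ?mul1r //.
  by move=> ? ?; rewrite mul0r.
by rewrite !Xval_delta (bZl hm) (bZr hm).
Qed.

Lemma Omat_sym : (Omat xi)^T = Omat xi.
Proof.
by apply/matrixP => i j; rewrite !mxE /intI; apply: eq_Rintegral => t _; rewrite mulrC.
Qed.

Lemma Omat_diag_neq0 j : Omat xi j j != 0.
Proof.
have [[t0 [h1 h2]]|hno] := pselect (exists t0, off_nodes n tau t0 /\ xi j t0 != 0).
  by rewrite mxE; apply/lt0r_neq0; exact: (intI_sq_gt0 hp (PWxi j) h1 h2).
exfalso.
have H : forall t, off_nodes n tau t -> \sum_j' (j' == j)%:R * xi j' t = 0 :> R.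
  move=> t ht.
  rewrite (bigD1 j) //= eqxx mul1r big1 ?addr0 => [|j' hj']; last by rewrite (negbTE hj') mul0r.
  case: (eqVneq (xi j t) 0) => // hne; exfalso; apply: hno; by exists t.
have := hxi.2.2.1 _ H j; rewrite eqxx => /eqP; by rewrite oner_eq0.
Qed.

Lemma Omat_unit : Omat xi \in unitmx.
Proof.
pose D := \matrix_(i, j) ((i == j)%:R / Omat xi j j).
suff hD : Omat xi *m D = 1%:M by case: (mulmx1_unit hD).
apply/matrixP => i j; rewrite !mxE (bigD1 j) //= big1 => [|k hk]; last first.
  by rewrite /D !mxE (negbTE hk) mul0r mulr0.
rewrite /D !mxE eqxx mul1r addr0.
case: (eqVneq i j) => [->|hij].
  by rewrite mulfV //; have := Omat_diag_neq0 j; rewrite mxE.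
by rewrite hxi.2.2.2 ?mul0r // eq_sym.
Qed.

Lemma gram f g : in_Pdisc n tau pt f -> in_Pdisc n tau pt g ->
  \sum_j \sum_j' intI (fun t => f t * xi j t) * invmx (Omat xi) j j'
     * intI (fun t => g t * xi j' t) = intI (fun t => f t * g t).
Proof.
move=> hf hg.
have PWf := in_Pdisc_PW hf; have PWg := in_Pdisc_PW hg.
have [c hc] := hxi.2.1 f hf; have [d hd] := hxi.2.1 g hg.
set O := Omat xi.
have hO : invmx O *m O = 1%:M by apply: mulVmx; exact: Omat_unit.
have ex (h : R -> R) (e : 'I_Mt -> R) : PW n tau h ->
    (forall t, off_nodes n tau t -> h t = \sum_a e a * xi a t) ->
    forall j, intI (fun t => h t * xi j t) = \sum_a e a * O j a.
  move=> hh he j.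
  rewrite (intI_ae hp (g := fun t => \sum_a e a * (xi a t * xi j t))); first last.
  - by move=> t ht; rewrite he // mulr_suml; apply: eq_bigr => a0 _; rewrite mulrA.
  - by apply: PW_sum => a0; apply: PW_scale; apply: PW_mul.
  - by apply: PW_mul.
  rewrite (intI_sum hp); last by move=> a0; apply: PW_scale; apply: PW_mul.
  apply: eq_bigr => a0 _; rewrite (intI_scale hp); last by apply: PW_mul.
  by rewrite mxE.
have h1 j : \sum_j' invmx O j j' * (\sum_b d b * O j' b) = d j.
  pose dv := \col_b d b.
  have := congr1 (fun (M : 'cV[R]_Mt) => M j 0) (mulmxA (invmx O) O dv).
  rewrite hO mul1mx /= => hh.
  transitivity (dv j 0); last by rewrite /dv mxE.
  rewrite -hh mxE; apply: eq_bigr => j' _; rewrite mxE; congr (_ * _).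
  by apply: eq_bigr => b _; rewrite mulrC; congr (_ * _); rewrite /dv mxE.
rewrite (intI_ae hp (g := fun t => \sum_a \sum_b (c a * d b) * (xi a t * xi b t))); first last.
- move=> t ht; rewrite hc // hd // mulr_suml; apply: eq_bigr => a0 _.
  by rewrite mulr_sumr; apply: eq_bigr => b _; ring.
- by apply: PW_sum => a0; apply: PW_sum => b; apply: PW_scale; apply: PW_mul.
- by apply: PW_mul.
rewrite (@intI_sum _ _ _ hp _ _ (fun a t => \sum_b (c a * d b) * (xi a t * xi b t))); last first.
  by move=> a0; apply: PW_sum => b; apply: PW_scale; apply: PW_mul.
have e2 a0 : intI (fun t => \sum_b (c a0 * d b) * (xi a0 t * xi b t)) = \sum_b c a0 * d b * O b a0.
  rewrite (@intI_sum _ _ _ hp _ _ (fun b t => (c a0 * d b) * (xi a0 t * xi b t))); last first.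
    by move=> b; apply: PW_scale; apply: PW_mul.
  apply: eq_bigr => b _; rewrite (intI_scale hp); last by apply: PW_mul.
  by rewrite mxE.
under [RHS]eq_bigr do rewrite e2.
transitivity (\sum_j (\sum_a c a * O j a) * d j).
  apply: eq_bigr => j _; rewrite -h1 mulr_sumr; apply: eq_bigr => j' _.
  by rewrite (ex f c PWf hc) (ex g d PWg hd) mulrA.
rewrite exchange_big /=; apply: eq_bigr => b _; rewrite mulr_suml.
by apply: eq_bigr => a0 _; ring.
Qed.

End Main.


Unset Implicit Arguments.
Local Open Scope ring_scope.

Theorem mainTheorem2 (R : realType) (E : lmodType R) (m a : E -> E -> R)
  (n : nat) (tau : nat -> R) (pt : nat)
  (Nt Mt Nx : nat) (phi : 'I_Nt -> R -> R) (xi : 'I_Mt -> R -> R)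
  (psi : 'I_Nx -> E) (Kx : 'M[R]_Nx) :
  symmetric_bilinear m -> symmetric_bilinear a ->
  is_partition n tau ->
  basis_Xt n tau pt phi ->
  orth_basis_Yt n tau pt xi ->
  spd Kx ->
  let KY := kron (invmx (Omat xi)) Kx in
  let Mx := Mxmat m psi in
  let Ax := Axmat a psi in
  forall ik ik' : 'I_Nt * 'I_Nx,
    Smat m a phi xi psi KY ik ik' =
      kron (Atmat phi) (Mx *m Kx *m Mx) ik ik'
    + kron (Mtmat phi) (Ax *m Kx *m Ax) ik ik'
    + kron (Lmat phi)^T (Mx *m Kx *m Ax) ik ik'
    + kron (Lmat phi) (Ax *m Kx *m Mx) ik ik'
    + kron (Gamma0 phi) Mx ik ik'.
Proof.
move=> hm ha hp hphi hxi _ KY Mx Ax [i k] [i' k'].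
rewrite (Smat_expand psi hm ha hp hphi hxi) /KY /kron /=.
set Oi := invmx (Omat xi).
have Pphi j : in_Pdisc n tau pt (phi j) := (hphi.1 j).1.
have Pdphi j : in_Pdisc n tau pt (derive1 (phi j)) := in_Pdisc_derive (Pphi j).
have gr f g : in_Pdisc n tau pt f -> in_Pdisc n tau pt g ->
    \sum_j \sum_j' intI (fun t => f t * xi j t) * Oi j j'
     * intI (fun t => g t * xi j' t) = intI (fun t => f t * g t).
  by move=> hf hg; exact: (gram hp hxi hf hg).
have eAt : Atmat phi i i' = \sum_j \sum_j' Lh phi xi j i * Oi j j' * Lh phi xi j' i'.
  rewrite /Lh gr // mxE /intI; apply: eq_Rintegral => t _; exact: mulrC.
have eMt : Mtmat phi i i' = \sum_j \sum_j' Nh phi xi j i * Oi j j' * Nh phi xi j' i'.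
  rewrite /Nh gr // mxE /intI; apply: eq_Rintegral => t _; exact: mulrC.
have eLT : (Lmat phi)^T i i' = \sum_j \sum_j' Lh phi xi j i * Oi j j' * Nh phi xi j' i'.
  by rewrite /Lh /Nh gr // !mxE.
have eL : Lmat phi i i' = \sum_j \sum_j' Nh phi xi j i * Oi j j' * Lh phi xi j' i'.
  rewrite /Lh /Nh gr // mxE /intI; apply: eq_Rintegral => t _; exact: mulrC.
have e3 (A C : 'M[R]_Nx) fa fc : (forall l, A k l = fa l) -> (forall l, C l k' = fc l) ->
    (A *m Kx *m C) k k' = \sum_l' (\sum_l fa l * Kx l l') * fc l'.
  by move=> h1 h2; exact: (@mulmx3E' _ _ A Kx C k k' fa fc h1 h2).
rewrite (e3 Mx Mx (fun l => m (psi k) (psi l)) (fun l => m (psi k') (psi l))); first last.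
  by move=> l; rewrite /Mx mxE. by move=> l; rewrite /Mx mxE hm.1.
rewrite (e3 Ax Ax (fun l => a (psi k) (psi l)) (fun l => a (psi k') (psi l))); first last.
  by move=> l; rewrite /Ax mxE. by move=> l; rewrite /Ax mxE ha.1.
rewrite (e3 Mx Ax (fun l => m (psi k) (psi l)) (fun l => a (psi k') (psi l))); first last.
  by move=> l; rewrite /Ax mxE. by move=> l; rewrite /Mx mxE hm.1.
rewrite (e3 Ax Mx (fun l => a (psi k) (psi l)) (fun l => m (psi k') (psi l))); first last.
  by move=> l; rewrite /Mx mxE. by move=> l; rewrite /Ax mxE ha.1.
rewrite eAt eMt eLT eL.
rewrite (quad Oi Kx (fun j => Lh phi xi j i) (fun j => Nh phi xi j i)
   (fun j => Lh phi xi j i') (fun j => Nh phi xi j i')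
   (fun l => m (psi k) (psi l)) (fun l => a (psi k) (psi l))
   (fun l => m (psi k') (psi l)) (fun l => a (psi k') (psi l))).
rewrite /Mx !mxE; ring.
Qed.
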